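(* Let $n\ge 2$ and let $P=[p_1,\ldots,p_n]$ be an arithmetically progressed permutation with ratio $k$ such that $p_1\notin\{1,k+1,n\}$. Then the associated ternary string $\mathsf{T}_P$ is the unique string of length $n$ over $\{\mathtt{a},\mathtt{b},\mathtt{c}\}$ whose suffix array is $P$.
   Context: Alphabet $\{\mathtt{a}<\mathtt{b}<\mathtt{c}\}$, lexicographic order with a proper prefix smaller than the longer string; suffix array $\mathsf{SA}_{\mathsf{T}}$: permutation of $[1..n]$ such that $\mathsf{T}[\mathsf{SA}_{\mathsf{T}}[i]..n]$ is the $i$-th smallest suffix. $x\bmod n$ denotes the representative of $x$ modulo $n$ in $[1..n]$. An arithmetically progressed permutation of length $n$ with ratio $k\in[1..n-1]$ is a permutation $P=[p_1,\ldots,p_n]$ of $[1..n]$ with $p_{i+1}=p_i+k\bmod n$. Ternary string associated with $P$: cut $P$ immediately after the entry $n-k$ and immediately after the entry $(p_1-k-1)\bmod n$, giving consecutive possibly empty blocks $A,B,C$ with $P=ABC$; set $\mathsf{T}_P[p_i]=\mathtt{a},\mathtt{b},\mathtt{c}$ according as $p_i$ lies in $A$, $B$, $C$. *)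

(* Defs.v *)
From mathcomp Require Import all_boot.
Set Implicit Arguments. Unset Strict Implicit. Unset Printing Implicit Defensive.

(* Letters a < b < c, encoded as 'I_3 = {0,1,2} with the natural order. *)
Definition la : 'I_3 := @Ordinal 3 0 isT.
Definition lb : 'I_3 := @Ordinal 3 1 isT.
Definition lc : 'I_3 := @Ordinal 3 2 isT.

Definition mod1 (n x : nat) : nat := if x %% n == 0 then n else x %% n.

Fixpoint lex_lt (s t : seq 'I_3) : bool :=
  match s, t with
  | [::], [::] => false
  | [::], _ :: _ => true
  | _ :: _, [::] => false
  | x :: s', y :: t' => (x < y) || ((x == y) && lex_lt s' t')
  end.

(* T[i..n] for a 1-based position i *)
Definition suff_at (T : seq 'I_3) (i : nat) : seq 'I_3 := drop i.-1 T.

Definition is_suffix_array (T : seq 'I_3) (P : seq nat) : Prop :=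
  perm_eq P (iota 1 (size T)) /\
  sorted (fun i j => lex_lt (suff_at T i) (suff_at T j)) P.

(* Arithmetically progressed permutation of length n with ratio k
   (p_{i+1} = p_i + k mod n, indices 0-based here). *)
Definition is_APP (n k : nat) (P : seq nat) : Prop :=
  [/\ perm_eq P (iota 1 n), 1 <= k <= n.-1 &
      forall i, i.+1 < n -> nth 0 P i.+1 = mod1 n (nth 0 P i + k)].

(* The ternary string associated with P: cut P immediately after the entry
   n-k and immediately after the entry (p_1 - k - 1) mod n (computed as
   (p_1 + n - k - 1) mod n), giving P = A B C. *)
Definition ternary_of (n k : nat) (P : seq nat) : seq 'I_3 :=
  let i1 := index (n - k) P in
  let i2 := index (mod1 n (head 0 P + n - k.+1)) P in
  let c1 := (minn i1 i2).+1 in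
  let c2 := (maxn i1 i2).+1 in
  let A := take c1 P in
  let B := drop c1 (take c2 P) in
  mkseq (fun j => if j.+1 \in A then la else if j.+1 \in B then lb else lc) n.

(* Main.v *)
Require Import Defs.
From mathcomp Require Import all_boot.
From mathcomp Require Import zify.

Lemma lex_cons (x : 'I_3) s t : lex_lt (x::s) (x::t) = lex_lt s t.
Proof. by rewrite /= ltnn eqxx. Qed.

Lemma lex_nil_r s : lex_lt s [::] = false.
Proof. by case: s. Qed.

Lemma lex_head (x y : 'I_3) s t : lex_lt (x::s) (y::t) -> x <= y.
Proof. rewrite /=; case/orP=> [/ltnW //|/andP[/eqP-> _]]; exact: leqnn. Qed.

Lemma lex_lt_lt (x y : 'I_3) s t : x < y -> lex_lt (x::s) (y::t).
Proof. by move=> h; rewrite /= h. Qed.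

Lemma lex_trans s t u : lex_lt s t -> lex_lt t u -> lex_lt s u.
Proof.
elim: s t u => [|x s IH] [|y t] [|z u] //=.
case/orP=> [xy|/andP[/eqP exy st]]; case/orP=> [yz|/andP[/eqP eyz tu]].
- by rewrite (ltn_trans xy yz).
- by rewrite -eyz xy.
- by rewrite exy yz.
- by rewrite exy eyz eqxx (IH _ _ st tu) orbT.
Qed.

Lemma lex_irr s : lex_lt s s = false.
Proof. by elim: s => //= x s IH; rewrite ltnn eqxx IH. Qed.

Lemma lex_asym s t : lex_lt s t -> lex_lt t s -> False.
Proof. by move=> a b; move: (lex_trans _ _ _ a b); rewrite lex_irr. Qed.

Lemma suff_cons (S : seq 'I_3) x : 1 <= x <= size S ->
  suff_at S x = nth la S x.-1 :: suff_at S x.+1.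
Proof.
move=> /andP[h1 h2]; rewrite /suff_at (drop_nth la); last by lia.
by rewrite prednK.
Qed.

Lemma mod1_mod n x : mod1 n x %% n = x %% n.
Proof. by rewrite /mod1; case: eqP => [->|_]; [rewrite modnn | rewrite modn_mod]. Qed.

Lemma mod1_succ n x : (mod1 n x).+1 %% n = x.+1 %% n.
Proof. by rewrite -addn1 -modnDml mod1_mod modnDml addn1. Qed.

Lemma mod1_range n x : 0 < n -> 1 <= mod1 n x <= n.
Proof. by move=> n0; rewrite /mod1; case: eqP; lia. Qed.

Lemma mod_inj n x y : 1 <= x <= n -> 1 <= y <= n -> x %% n = y %% n -> x = y.
Proof.
move=> hx hy.
have e: forall z, 1 <= z <= n -> z %% n = if z == n then 0 else z.
  move=> z hz; case: eqP => [->|ne]; first by rewrite modnn.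
  rewrite modn_small //; lia.
rewrite !e //; do 2 case: eqP; lia.
Qed.

Lemma app_facts n k P : is_APP n k P ->
  [/\ size P = n, uniq P & forall x, (x \in P) = (1 <= x <= n)].
Proof.
case=> pe _ _; split.
- by rewrite (perm_size pe) size_iota.
- by rewrite (perm_uniq pe) iota_uniq.
- by move=> x; rewrite (perm_mem pe) mem_iota add1n ltnS.
Qed.

Arguments app_facts {n k P}.

Lemma app_mod n k P : is_APP n k P ->
  forall i, i < n -> nth 0 P i %% n = (head 0 P + i * k) %% n.
Proof.
move=> [_ _ h]; elim=> [|i IH] hi; first by rewrite mul0n addn0 nth0.
rewrite h // mod1_mod -modnDml IH ?modnDml ?mulSnr ?addnA //; lia.
Qed.

Arguments app_mod {n k P}.

Definition qv n k (P : seq nat) := mod1 n (head 0 P + n - k.+1).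
Definition lv n k (P : seq nat) j :=
  (minn (index (n - k) P) (index (qv n k P) P) < j) +
  (maxn (index (n - k) P) (index (qv n k P) P) < j).

Lemma last_mod n k P : 0 < n -> is_APP n k P ->
  (nth 0 P n.-1 + k) %% n = head 0 P %% n.
Proof.
move=> n0 hP; rewrite -modnDml (app_mod hP) ?prednK ?leqnn // modnDml -addnA -mulSnr prednK //.
by rewrite mulnC addnC modnMDl.
Qed.

Lemma q_mod n k P : 1 <= head 0 P -> k < n ->
  (qv n k P + k.+1) %% n = head 0 P %% n.
Proof.
move=> h1 kn; rewrite /qv -modnDml mod1_mod modnDml.
have -> : head 0 P + n - k.+1 + k.+1 = head 0 P + n by lia.
by rewrite modnDr.
Qed.

Lemma tern_val n k P j : is_APP n k P -> j < n ->
  nat_of_ord (nth la (ternary_of n k P) (nth 0 P j).-1) = lv n k P j.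
Proof.
move=> hP hj; have [sz uq mem] := app_facts hP.
have xin : nth 0 P j \in P by rewrite mem_nth // sz.
have := xin; rewrite mem => /andP[x1 xn].
rewrite /ternary_of nth_mkseq; last by lia.
rewrite prednK //.
set x := nth 0 P j.
set c1 := (minn _ _).+1; set c2 := (maxn _ _).+1.
have ix : index x P = j by rewrite index_uniq // sz.
have hB : x \notin take c1 P -> (x \in drop c1 (take c2 P)) = (x \in take c2 P).
  move=> hA; rewrite -{2}(cat_take_drop c1 (take c2 P)) mem_cat take_takel.
    by rewrite (negbTE hA).
  by rewrite /c1 /c2 ltnS geq_min leq_maxl.
rewrite /lv /qv.
case: ifP => hA.
  by move: hA; rewrite in_take // ix /c1 /=; lia.
rewrite hB ?hA //; move: hA; rewrite !in_take // ix /c1 /c2.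
case: ifP => /= ; lia.
Qed.

Arguments tern_val {n k P j}.

Lemma lv_mono n k P j : lv n k P j <= lv n k P j.+1.
Proof. rewrite /lv; lia. Qed.

Lemma exist_step n k P : 2 <= n -> is_APP n k P ->
  forall j, j.+1 < n ->
  lex_lt (suff_at (ternary_of n k P) (nth 0 P j))
         (suff_at (ternary_of n k P) (nth 0 P j.+1)).
Proof.
move=> n2 hP; have [sz uq mem] := app_facts hP.
have [_ /andP[k1 kn] hstep] := hP.
set T := ternary_of n k P.
have szT : size T = n by rewrite size_mkseq.
have inr : forall i, i < n -> 1 <= nth 0 P i <= n.
  by move=> i hi; rewrite -mem mem_nth // sz.
suff H : forall m j, n - nth 0 P j < m -> j.+1 < n ->
  lex_lt (suff_at T (nth 0 P j)) (suff_at T (nth 0 P j.+1)).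
  by move=> j; apply: (H n.+1); lia.
elim=> [|m IH] j hm hj; first by [].
set a := nth 0 P j; set b := nth 0 P j.+1.
have hb : b = mod1 n (a + k) by apply: hstep.
have ha : 1 <= a <= n by apply: inr; lia.
have hb' : 1 <= b <= n by apply: inr.
rewrite (suff_cons T a) ?szT // (suff_cons T b) ?szT //.
have va := @tern_val n k P j hP (ltnW hj).
have vb := @tern_val n k P j.+1 hP hj.
case: (ltnP (lv n k P j) (lv n k P j.+1)) => hlt.
  by apply: lex_lt_lt; rewrite /T va vb.
have eqv : nth la T a.-1 = nth la T b.-1.
  by apply: val_inj; rewrite /= /T va vb; have := lv_mono n k P j; lia.
rewrite eqv lex_cons.
have ni : j <> index (n - k) P /\ j <> index (qv n k P) P.
  by move: hlt; rewrite /lv; lia.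
have ia : index a P = j by rewrite index_uniq // sz; lia.
have an1 : a <> n - k by move=> e; apply: ni.1; rewrite -e ia.
have an2 : a <> qv n k P by move=> e; apply: ni.2; rewrite -e ia.
case: (eqVneq a n) => [an|an].
  have bk : b = k.
    rewrite hb an /mod1 addnC modnDr modn_small; last by lia.
    by have -> : (k == 0) = false by lia.
  rewrite /suff_at /= an -szT drop_size bk (drop_nth la) //; lia.
have altn : a < n by lia.
have bn : b <> n.
  move=> e; apply: an1; apply: (@mod_inj n); try lia.
  have := mod1_mod n (a + k); rewrite -hb e modnn => h.
  have : (a + k) %% n = (n - k + k) %% n by rewrite -h subnK ?modnn //; lia.
  by move/eqP; rewrite eqn_modDr => /eqP.
have a1in : a.+1 \in P by rewrite mem; lia.
set j' := index a.+1 P.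
have j'n : j' < n by rewrite -sz index_mem.
have nj' : nth 0 P j' = a.+1 by rewrite nth_index.
have j'1 : j'.+1 < n.
  case: (ltnP j'.+1 n) => // h; exfalso; apply: an2.
  have ej : j' = n.-1 by lia.
  have lm := last_mod _ _ _ (ltnW n2) hP; rewrite -ej nj' in lm.
  have hpos : 1 <= head 0 P by rewrite -nth0; have := inr 0; lia.
  have qm := q_mod n k P hpos (ltac:(lia)).
  have qr := mod1_range n (head 0 P + n - k.+1) (ltnW n2); rewrite -/(qv n k P) in qr.
  apply: (@mod_inj n); try lia.
  apply/eqP; rewrite -(eqn_modDr k.+1) addnS -addSn lm qm //.
have := IH j' _ j'1; rewrite nj' hstep // nj'.
have -> : mod1 n (a.+1 + k) = b.+1.
  have r := mod1_range n (a.+1 + k) (ltnW n2).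
  apply: (@mod_inj n); try lia.
  by rewrite mod1_mod hb mod1_succ addSn.
apply; lia.
Qed.

Lemma modS_neq n x : 1 < n -> x.+1 %% n <> x %% n.
Proof.
move=> n1 e; have : (x + 1 == x + 0 %[mod n]) by rewrite addn0 addn1 e.
by rewrite eqn_modDl !modn_small //; lia.
Qed.

Lemma shape (f : nat -> nat) n m M j : m < M -> M.+1 < n ->
  (forall i j, i <= j -> j < n -> f i <= f j) -> (forall j, f j <= 2) ->
  f m < f m.+1 -> f M < f M.+1 -> j < n -> f j = (m < j) + (M < j).
Proof.
move=> mM Mn mono le2 s1 s2 jn.
have a1 := mono m.+1 M mM (ltnW Mn).
have a2 := le2 M.+1.
case: (leqP j m) => hj.
  have := mono j m hj (ltn_trans mM (ltnW Mn)); lia.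
case: (leqP j M) => hj2.
  have := mono j M hj2 (ltnW Mn); have := mono m.+1 j hj jn; lia.
have := mono M.+1 j hj2 jn; have := le2 j; lia.
Qed.

Lemma uniq_part n k P S : 2 <= n -> is_APP n k P ->
  head 0 P \notin [:: 1; k.+1; n] -> size S = n -> is_suffix_array S P ->
  S = ternary_of n k P.
Proof.
move=> n2 hP hh szS [_ srt].
have [sz uq mem] := app_facts hP.
have [_ /andP[k1 kn] hstep] := hP.
have inr : forall i, i < n -> 1 <= nth 0 P i <= n.
  by move=> i hi; rewrite -mem mem_nth // sz.
have hs : forall j, j.+1 < n ->
    lex_lt (suff_at S (nth 0 P j)) (suff_at S (nth 0 P j.+1)).
  by move=> j hj; move/(sortedP 0): srt; apply; rewrite sz.
set f := fun j => nat_of_ord (nth la S (nth 0 P j).-1).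
have sc : forall j, j < n -> suff_at S (nth 0 P j) =
    nth la S (nth 0 P j).-1 :: suff_at S (nth 0 P j).+1.
  by move=> j hj; apply: suff_cons; rewrite szS; apply: inr.
have mono : forall j, j.+1 < n -> f j <= f j.+1.
  move=> j hj; have := hs j hj; rewrite (sc j) ?(sc j.+1) //; last by lia.
  exact: lex_head.
have monoR : forall i j, i <= j -> j < n -> f i <= f j.
  move=> i; elim=> [|j IH] hij hj; first by have -> : i = 0 by lia.
  case: (eqVneq i j.+1) => [->//|ne].
  apply: (leq_trans (IH _ _)); try lia; exact: mono.
have chain : forall j, 0 < j < n ->
    lex_lt (suff_at S (nth 0 P 0)) (suff_at S (nth 0 P j)).
  elim=> [|j IH] hj; first by lia.
  case: (eqVneq j 0) => [->|nz]; first by apply: hs; lia.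
  apply: (lex_trans _ _ _ (IH _)); first by lia.
  by apply: hs; lia.
have fle : forall j, f j <= 2 by move=> j; rewrite /f; have := ltn_ord (nth la S (nth 0 P j).-1); lia.
set h := head 0 P.
have h0 : nth 0 P 0 = h by rewrite nth0.
have hr : 1 <= h <= n by rewrite -h0; apply: inr; lia.
have h1 : h != 1 by apply: contra hh => /eqP <-; rewrite !inE eqxx.
have hk1 : h != k.+1 by apply: contra hh => /eqP <-; rewrite !inE eqxx !orbT.
have hn : h != n by apply: contra hh => /eqP <-; rewrite !inE eqxx !orbT.
have lm := last_mod _ _ _ (ltnW n2) hP; rewrite -/h in lm.
have nkin : n - k \in P by rewrite mem; lia.
set i1 := index (n - k) P.
have i1n : i1 < n by rewrite -sz index_mem.
have ni1 : nth 0 P i1 = n - k by rewrite nth_index.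
have i11 : i1.+1 < n.
  case: (ltnP i1.+1 n) => // hi; exfalso.
  have ej : i1 = n.-1 by lia.
  rewrite -ej ni1 subnK ?modnn in lm; last by lia.
  move/eqP: hn; apply; apply: (@mod_inj n) => //; try lia.
  by rewrite modnn.
have ni11 : nth 0 P i1.+1 = n.
  by rewrite hstep // ni1 subnK ?/mod1 ?modnn ?eqxx //; lia.
have st1 : f i1 < f i1.+1.
  case: (ltnP (f i1) (f i1.+1)) => // hle; exfalso.
  have e : nth la S (nth 0 P i1).-1 = nth la S (nth 0 P i1.+1).-1.
    by apply: val_inj; have := mono i1 i11; move: hle; rewrite /f /=; lia.
  have := hs i1 i11; rewrite (sc i1) // (sc i1.+1) // e lex_cons ni11.
  by rewrite /suff_at /= -szS drop_size lex_nil_r.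
set q := qv n k P.
have qr : 1 <= q <= n by apply: mod1_range; lia.
have qm : (q + k.+1) %% n = h %% n by apply: q_mod; lia.
have qin : q \in P by rewrite mem.
set i2 := index q P.
have i2n : i2 < n by rewrite -sz index_mem.
have ni2 : nth 0 P i2 = q by rewrite nth_index.
have qn : q < n.
  case: (ltnP q n) => // hq; exfalso; have eq : q = n by lia.
  move: qm; rewrite eq modnDl => e.
  move/eqP: hk1; apply; apply: (@mod_inj n) => //; lia.
have i21 : i2.+1 < n.
  case: (ltnP i2.+1 n) => // hi; exfalso.
  have ej : i2 = n.-1 by lia.
  rewrite -ej ni2 in lm.
  apply: (@modS_neq n (q + k)) => //; by rewrite -addnS qm lm.
have ni21 : nth 0 P i2.+1 = h.-1.
  rewrite hstep // ni2; apply: (@mod_inj n); [apply: mod1_range; lia | lia |].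
  rewrite mod1_mod; apply/eqP; rewrite -(eqn_modDr 1) !addn1 prednK; last by lia.
  by rewrite -addnS qm.
have lastq : nth 0 P n.-1 = q.+1.
  apply: (@mod_inj n); [apply: inr; lia | lia |].
  by apply/eqP; rewrite -(eqn_modDr k) lm addSn -addnS qm.
have st2 : f i2 < f i2.+1.
  case: (ltnP (f i2) (f i2.+1)) => // hle; exfalso.
  have e : nth la S (nth 0 P i2).-1 = nth la S (nth 0 P i2.+1).-1.
    by apply: val_inj; have := mono i2 i21; move: hle; rewrite /f /=; lia.
  have := hs i2 i21; rewrite (sc i2) // (sc i2.+1) // e lex_cons ni21 ni2.
  rewrite prednK; last by lia.
  rewrite -lastq -h0 => hlt.
  apply: (lex_asym _ _ hlt); apply: chain; lia.
have i12 : i1 <> i2.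
  move=> e; have : n - k = q by rewrite -ni1 -ni2 e.
  move=> eq; move: qm; rewrite -eq addnS subnK; last by lia.
  rewrite -addn1.
  rewrite modnDl => e2; move/eqP: h1; apply.
  apply: (@mod_inj n) => //; lia.
have fj : forall j, j < n -> f j = lv n k P j.
  move=> j hj; rewrite /lv -/q -/i1 -/i2.
  case: (ltngtP i1 i2) => [lt|gt|eq]; last by exfalso; apply: i12.
    by apply: (shape f n) => //; try lia; move=> x y; apply: monoR.
  by apply: (shape f n) => //; try lia; move=> x y; apply: monoR.
apply: (@eq_from_nth _ la); first by rewrite szS size_mkseq.
move=> i; rewrite szS => hi.
have xin : i.+1 \in P by rewrite mem; lia.
set j := index i.+1 P.
have jn : j < n by rewrite -sz index_mem.
have nj : nth 0 P j = i.+1 by rewrite nth_index.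
apply: val_inj.
have := tern_val hP jn; rewrite nj /= => ->.
by rewrite -fj // /f nj.
Qed.

Theorem theorem7 (n k : nat) (P : seq nat) :
  2 <= n ->
  is_APP n k P ->
  head 0 P \notin [:: 1; k.+1; n] ->
  is_suffix_array (ternary_of n k P) P /\
  (forall S : seq 'I_3, size S = n -> is_suffix_array S P -> S = ternary_of n k P).
Proof.
move=> n2 hP hh; split; last by move=> S; apply: uniq_part.
have [sz _ _] := app_facts hP.
have [pe _ _] := hP.
split; first by rewrite size_mkseq.
apply/(sortedP 0) => i; rewrite sz; exact: exist_step.
Qed.
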